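(* Let $\boldsymbol{G}\in\{0,1\}^{r\times m}$ with $r\le m$, let $p=\min\{\lfloor m/2\rfloor, r\}$, and let $q$ be a prime power with $q\ge\binom{m}{p}$. Let $\boldsymbol{H}\in\mathbb{F}_q^{r\times m}$ be the output of any execution of the MCD algorithm on $(\boldsymbol{G},q)$. Then for every $k\in[r]$ and every $L\subseteq[m]$, the submatrix $\boldsymbol{H}_{[k]}^{L}$ reaches its maximum possible rank, i.e. $$\mathrm{rank}\,\boldsymbol{H}_{[k]}^{L}=\max\{\mathrm{rank}\,\boldsymbol{H}'^{L}_{[k]}:\ \boldsymbol{H}'\in\mathbb{F}_q^{r\times m}\text{ fits }\boldsymbol{G}\}.$$
   Context: $\boldsymbol{H}$ fits $\boldsymbol{G}$ if $h_{k,i}=0$ whenever $g_{k,i}=0$. $\boldsymbol{H}_{[k]}$ is the submatrix of the first $k$ rows and $\boldsymbol{H}_{[k]}^{L}$ its submatrix with columns in $L$. For a matrix with columns indexed by $[m]$, a set $S\subseteq[m]$ is independent if the columns indexed by $S$ are linearly independent, dependent otherwise, and a circuit if it is dependent but every proper subset is independent. Veto sets: let $2\le k\le r$, $i\in L\subseteq[m]$, and suppose all entries of $\boldsymbol{H}_{[k]}^{L}$ other than $h_{k,i}$ are fixed. For a circuit $C$ of $\boldsymbol{H}_{[k-1]}$ with $i\in C\subseteq L$, the column of $\boldsymbol{H}_{[k-1]}$ indexed by $i$ is a unique linear combination $\sum_{j\in C\setminus\{i\}} f_j\,(\text{column } j \text{ of } \boldsymbol{H}_{[k-1]})$; its veto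 value is $c(C)=\sum_{j\in C\setminus\{i\}} f_j h_{k,j}$ (so $c(\{i\})=0$). The veto set is $Z_{k,i}^{L}=\{c(L'\cup\{i\}): L'\subseteq L\setminus\{i\},\ L'\cup\{i\}\text{ a circuit of }\boldsymbol{H}_{[k-1]}\}$. MCD algorithm on $(\boldsymbol{G},q)$, with $G_k=\{i: g_{k,i}=1\}$: set $h_{k,i}=0$ whenever $g_{k,i}=0$; set $h_{1,i}=1$ for $i\in G_1$; for $k=2,\dots,r$: let $R=G_k$; while $R\ne\emptyset$: pick any $i\in R$, set $R\leftarrow R\setminus\{i\}$ and $L=[m]\setminus R$, compute $Z_{k,i}^{L}$ from the current entries (all entries of $\boldsymbol{H}_{[k]}^{L}$ except $h_{k,i}$ are fixed at this point), and set $h_{k,i}$ to an arbitrary element of $\mathbb{F}_q\setminus Z_{k,i}^{L}$. *)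

(* Defs.v *)
From mathcomp Require Import all_boot all_order all_algebra all_field.
Set Implicit Arguments. Unset Strict Implicit. Unset Printing Implicit Defensive.
Import GRing.Theory.
Local Open Scope ring_scope.

Section MCD.
Variable F : fieldType.

Definition fits (r m : nat) (G : 'M[bool]_(r, m)) (H : 'M[F]_(r, m)) : bool :=
  [forall k, forall i, ~~ G k i ==> (H k i == 0)].

(* H_[k]^L : first k rows, columns in L (in increasing order). *)
Definition subH (r m k : nat) (hk : (k <= r)%N) (H : 'M[F]_(r, m))
    (L : {set 'I_m}) : 'M[F]_(k, #|L|) :=
  \matrix_(i < k, j < #|L|) H (widen_ord hk i) (enum_val j).

Definition topH (r m k : nat) (hk : (k <= r)%N) (H : 'M[F]_(r, m)) : 'M[F]_(k, m) :=
  \matrix_(i < k, j < m) H (widen_ord hk i) j.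

Definition col_indep (n m : nat) (M : 'M[F]_(n, m)) (S : {set 'I_m}) : Prop :=
  forall a : 'I_m -> F, \sum_(j in S) a j *: col j M = 0 ->
    forall j, j \in S -> a j = 0.

Definition col_dep (n m : nat) (M : 'M[F]_(n, m)) (S : {set 'I_m}) : Prop :=
  ~ col_indep M S.

Definition circuit (n m : nat) (M : 'M[F]_(n, m)) (S : {set 'I_m}) : Prop :=
  col_dep M S /\ forall T : {set 'I_m}, T \proper S -> col_indep M T.

(* z \in Z_{k,i}^L, for 0-based row index k (paper's row k+1), so that
   H_[k-1] of the paper is the matrix of the first k rows (0-based < k),
   and h_{k,j} of the paper is H k j here. The veto value c(L' ∪ {i}) is
   \sum_{j in L'} f_j h_{k,j} where col_i = \sum_{j in L'} f_j col_j
   (f unique because L' ∪ {i} is a circuit). *)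
Definition veto (r m : nat) (H : 'M[F]_(r, m)) (k : 'I_r) (i : 'I_m)
    (L : {set 'I_m}) (z : F) : Prop :=
  let M := topH (ltnW (ltn_ord k)) H in
  exists L' : {set 'I_m},
    [/\ L' \subset L :\ i, circuit M (i |: L') &
      exists f : 'I_m -> F,
        col i M = \sum_(j in L') f j *: col j M /\
        z = \sum_(j in L') f j * H k j].

(* H is the output of some execution of the MCD algorithm on (G, q),
   q = #|F|.  For every row k >= 2 (0-based k >= 1), the execution processes
   G_k in some order s; when i is processed, R is the set of elements of s
   after i, L = [m] \ R, and h_{k,i} must avoid Z_{k,i}^L. *)
Definition MCD_output (r m : nat) (G : 'M[bool]_(r, m)) (H : 'M[F]_(r, m)) : Prop :=
  [/\ forall k i, G k i = false -> H k i = 0,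
      forall (k : 'I_r) i, nat_of_ord k = 0%N -> G k i = true -> H k i = 1 &
      forall k : 'I_r, (0 < k)%N ->
        exists s : seq 'I_m,
          [/\ uniq s, forall i, (i \in s) = G k i &
              forall i, i \in s ->
                ~ veto H k i (~: [set x | x \in drop (index i s).+1 s]) (H k i)]].

End MCD.

(* Main.v *)
Require Import Defs.
From mathcomp Require Import all_boot all_order all_algebra all_field.
From Stdlib Require Import Classical.
Set Implicit Arguments. Unset Strict Implicit. Unset Printing Implicit Defensive.
Import GRing.Theory.
Local Open Scope ring_scope.
Section Msk.
Variable F : fieldType.

Definition msk n (S : {set 'I_n}) : 'M[F]_n := diag_mx (\row_j (j \in S)%:R).

Lemma row_msk n p (S : {set 'I_n}) (Y : 'M[F]_(n, p)) a :
  row a (msk S *m Y) = (a \in S)%:R *: row a Y.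
Proof. by rewrite row_mul row_diag_mx mxE -scalemxAl -rowE. Qed.

Lemma msk_row_sub n p (S : {set 'I_n}) (Y : 'M[F]_(n, p)) a :
  a \in S -> (row a Y <= msk S *m Y)%MS.
Proof.
move=> aS; have := row_sub a (msk S *m Y).
by rewrite row_msk aS scale1r.
Qed.

Lemma msk_sub n p (S : {set 'I_n}) (Y : 'M[F]_(n, p)) m' (B : 'M[F]_(m', p)) :
  (forall a, a \in S -> (row a Y <= B)%MS) -> (msk S *m Y <= B)%MS.
Proof.
move=> h; apply/row_subP => a; rewrite row_msk.
case: (boolP (a \in S)) => aS; first by rewrite scale1r h.
by rewrite scale0r sub0mx.
Qed.

Lemma msk_subset n p (S T : {set 'I_n}) (Y : 'M[F]_(n, p)) :
  S \subset T -> (msk S *m Y <= msk T *m Y)%MS.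
Proof. by move=> /subsetP sST; apply: msk_sub => a /sST; apply: msk_row_sub. Qed.

Lemma msk_U1_sub n p (S : {set 'I_n}) (Y : 'M[F]_(n, p)) i :
  (msk (i |: S) *m Y <= msk S *m Y + row i Y)%MS.
Proof.
apply: msk_sub => a; rewrite in_setU1 => /orP[/eqP -> | aS].
  exact: addsmxSr.
exact: submx_trans (msk_row_sub _ aS) (addsmxSl _ _).
Qed.

Lemma rank_msk_U1 n p (S : {set 'I_n}) (Y : 'M[F]_(n, p)) i :
  (\rank (msk (i |: S) *m Y) <= \rank (msk S *m Y) + \rank (row i Y))%N.
Proof.
apply: leq_trans (mxrankS (msk_U1_sub S Y i)) _.
exact: (mxrank_adds_leqif _ _).
Qed.

Lemma rank_msk_U1_le n p (S : {set 'I_n}) (Y : 'M[F]_(n, p)) i :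
  (\rank (msk (i |: S) *m Y) <= (\rank (msk S *m Y)).+1)%N.
Proof.
apply: leq_trans (rank_msk_U1 S Y i) _.
by rewrite -[X in (_ <= X)%N]addn1 leq_add2l rank_leq_row.
Qed.

Lemma rank_msk_U1_0 n p (S : {set 'I_n}) (Y : 'M[F]_(n, p)) i :
  row i Y = 0 -> (\rank (msk (i |: S) *m Y) <= \rank (msk S *m Y))%N.
Proof.
move=> h; apply: leq_trans (rank_msk_U1 S Y i) _.
by rewrite h mxrank0 addn0.
Qed.

Lemma rank_msk_U1_gt n p (S : {set 'I_n}) (Y : 'M[F]_(n, p)) i :
  ~~ (row i Y <= msk S *m Y)%MS ->
  ((\rank (msk S *m Y)).+1 <= \rank (msk (i |: S) *m Y))%N.
Proof.
move=> hn.
have lt1 : (msk S *m Y < msk S *m Y + row i Y)%MS.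
  by rewrite ltmxE addsmxSl /= addsmx_sub submx_refl /=.
apply: leq_trans (rank_ltmx lt1) _; apply: mxrankS.
rewrite addsmx_sub msk_subset ?subsetUr //=.
by apply: msk_row_sub; rewrite setU11.
Qed.

Lemma msk_coeffs n p (S : {set 'I_n}) (Y : 'M[F]_(n, p)) i :
  (row i Y <= msk S *m Y)%MS ->
  exists w : 'I_n -> F, row i Y = \sum_(a in S) w a *: row a Y.
Proof.
case/submxP => D ->; exists (fun a => D 0 a).
rewrite mulmxA mulmx_sum_row (bigID (fun a => a \in S)) /=.
rewrite [X in _ + X]big1 ?addr0; last first.
  by move=> a /negPf aS; rewrite mul_mx_diag !mxE aS mulr0 scale0r.
by apply: eq_bigr => a aS; rewrite mul_mx_diag !mxE aS mulr1.
Qed.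

Lemma msk0 n : msk (set0 : {set 'I_n}) = 0.
Proof. by apply/matrixP => a b; rewrite !mxE in_set0 mul0rn. Qed.

Lemma msk_tr n (S : {set 'I_n}) : (msk S)^T = msk S.
Proof. exact: tr_diag_mx. Qed.

Lemma rank_rowsub_msk n p q (S : {set 'I_n}) (f : 'I_q -> 'I_n) (W : 'M[F]_(n, p)) :
  (forall l, f l \in S) -> (forall a, a \in S -> exists l, f l = a) ->
  \rank (rowsub f W) = \rank (msk S *m W).
Proof.
move=> fS Sf; apply/eqP; rewrite eqn_leq; apply/andP; split; apply: mxrankS.
  by apply/row_subP => l; rewrite row_rowsub; apply: msk_row_sub.
apply: msk_sub => a /Sf [l <-]; rewrite -row_rowsub; exact: row_sub.
Qed.

Lemma rank_subH r m k (hk : (k <= r)%N) (H : 'M[F]_(r, m)) (L : {set 'I_m}) :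
  \rank (subH hk H L) = \rank (msk [set a : 'I_r | (a < k)%N] *m H *m msk L).
Proof.
have -> : subH hk H L = rowsub (widen_ord hk) (colsub (fun j : 'I_#|L| => enum_val j) H).
  by apply/matrixP => a b; rewrite !mxE.
rewrite (@rank_rowsub_msk _ _ _ [set a : 'I_r | (a < k)%N]); last 2 first.
- by move=> l; rewrite inE /=.
- move=> a; rewrite inE => ak; exists (Ordinal ak); exact: val_inj.
rewrite mulmx_colsub -mxrank_tr.
have -> : (colsub (fun j : 'I_#|L| => enum_val j) (msk [set a : 'I_r | (a < k)%N] *m H))^T
  = rowsub (fun j : 'I_#|L| => enum_val j) (msk [set a : 'I_r | (a < k)%N] *m H)^T.
  by apply/matrixP => a b; rewrite !mxE.
rewrite (@rank_rowsub_msk _ _ _ L); last 2 first.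
- by move=> l; apply: enum_valP.
- by move=> a aL; exists (enum_rank_in aL a); rewrite enum_rankK_in.
by rewrite -mxrank_tr trmx_mul trmxK msk_tr.
Qed.
End Msk.
Arguments msk {F n} S.
Section Circ.
Variable F : fieldType.

Lemma sum_sub_cond (V : zmodType) n (T U : {set 'I_n}) (x : 'I_n -> V) :
  T \subset U -> \sum_(j in T) x j = \sum_(j in U) (if j \in T then x j else 0).
Proof.
move=> /subsetP TU; rewrite big_mkcond [RHS]big_mkcond; apply: eq_bigr => j _.
by case: (boolP (j \in T)) => jT; rewrite ?(TU _ jT) //; case: (j \in U).
Qed.

Lemma circuit_of n m (M : 'M[F]_(n, m)) i :
  forall (S : {set 'I_m}) (f : 'I_m -> F), i \notin S ->
  col i M = \sum_(j in S) f j *: col j M ->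
  exists L' : {set 'I_m}, [/\ L' \subset S, circuit M (i |: L') &
     exists f', col i M = \sum_(j in L') f' j *: col j M].
Proof.
pose v j := col j M.
suff main : forall N (S : {set 'I_m}) (f : 'I_m -> F), #|S| = N -> i \notin S ->
  v i = \sum_(j in S) f j *: v j ->
  exists L' : {set 'I_m}, [/\ L' \subset S, circuit M (i |: L') &
     exists f', v i = \sum_(j in L') f' j *: v j].
  by move=> S f; apply: (main #|S|).
elim/ltn_ind => N IH S f cardS iS rep.
case: (classic (forall T : {set 'I_m}, T \proper i |: S -> col_indep M T)) => [allind|].
  exists S; split => //; last by exists f.
  split; last exact: allind.
  move=> ind.
  suff h0 : (-1 : F) = 0 by move/eqP: h0; rewrite oppr_eq0 oner_eq0.
  have := ind (fun j => if j == i then -1 else f j) _ i (setU11 _ _).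
  rewrite eqxx; apply.
  rewrite big_setU1 //= eqxx scaleN1r.
  rewrite (eq_bigr (fun j => f j *: v j)); first by rewrite -rep addNr.
  by move=> j jS; case: eqP => // eji; rewrite -eji jS in iS.
move=> /not_all_ex_not [T hT].
have [propT /not_all_ex_not [a ha]] := imply_to_and _ _ hT.
have [sum0 /not_all_ex_not [j0 hj0]] := imply_to_and _ _ ha.
have [j0T /eqP aj0] := imply_to_and _ _ hj0.
have TU : T \subset i |: S by apply: proper_sub.
have cardT : (#|T| < #|S|.+1)%N by apply: leq_trans (proper_card propT) _; rewrite cardsU1 iS.
case: (boolP ((i \in T) && (a i != 0))) => [/andP [iT ai0] | hcase].
  have := sum0; rewrite (big_setD1 i iT) /= => /eqP; rewrite addr_eq0 => /eqP e1.
  have Ssub : T :\ i \subset S.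
    apply/subsetP => j; rewrite !inE => /andP [ji jT].
    by move/subsetP: TU => /(_ j jT); rewrite !inE (negPf ji).
  have cS : (#|T :\ i| < N)%N.
    by move: cardT; rewrite (cardsD1 i T) iT cardS.
  have iTi : i \notin T :\ i by rewrite !inE eqxx.
  have rep1 : v i = \sum_(j in T :\ i) (- (a i)^-1 * a j) *: v j.
    rewrite -[v i](scalerK ai0) e1 scalerN -scaleNr scaler_sumr.
    by apply: eq_bigr => j _; rewrite scalerA.
  have [L' [L'S circ [f' rep']]] := IH _ cS (T :\ i) _ erefl iTi rep1.
  exists L'; split => //; last by exists f'.
  exact: subset_trans L'S Ssub.
have j0i : j0 != i.
  by apply/eqP => e; move: hcase; rewrite -e j0T aj0.
have j0S : j0 \in S.
  by move/subsetP: TU => /(_ j0 j0T); rewrite !inE (negPf j0i).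
pose b j := if j \in T then a j else 0.
have sumb : \sum_(j in S) b j *: v j = 0.
  move: sum0; rewrite (sum_sub_cond _ TU) big_setU1 //=.
  have -> : (if i \in T then a i *: v i else 0) = 0.
    by move: hcase; case: (i \in T) => //= /negPn/eqP ->; rewrite scale0r.
  rewrite add0r => e; rewrite -[X in _ = X]e; apply: eq_bigr => j _; rewrite /b.
  by case: (j \in T) => //; rewrite scale0r.
have bj0 : b j0 != 0 by rewrite /b j0T.
pose c := f j0 / b j0.
pose g j := f j - c * b j.
have rep2 : v i = \sum_(j in S :\ j0) g j *: v j.
  have -> : \sum_(j in S :\ j0) g j *: v j = \sum_(j in S) g j *: v j.
    rewrite (big_setD1 j0 j0S) /= /g /c mulfVK // subrr scale0r add0r //.
  rewrite /g (eq_bigr (fun j => f j *: v j - c *: (b j *: v j))); last first.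
    by move=> j _; rewrite scalerBl scalerA.
  by rewrite sumrB -scaler_sumr sumb scaler0 subr0.
have c2 : (#|S :\ j0| < N)%N by rewrite -cardS (cardsD1 j0 S) j0S.
have iSj : i \notin S :\ j0 by rewrite !inE (negPf iS) andbF.
have [L' [L'S circ [f' rep']]] := IH _ c2 (S :\ j0) g erefl iSj rep2.
exists L'; split => //; last by exists f'.
by apply: subset_trans L'S (subD1set _ _).
Qed.
End Circ.

Lemma index_drop (T : eqType) (s : seq T) n x :
  uniq s -> x \in drop n s -> (n <= index x s)%N.
Proof.
move=> us xd.
have : uniq (take n s ++ drop n s) by rewrite cat_take_drop.
rewrite cat_uniq => /and3P [_ hn _].
have xt : x \notin take n s.
  by apply/negP => xt; move/hasPn: hn => /(_ x xd); rewrite xt.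
have -> : index x s = index x (take n s ++ drop n s) by rewrite cat_take_drop.
rewrite index_cat (negPf xt) size_take.
case: ltnP => [_|hle]; first exact: leq_addr.
by rewrite drop_oversize in xd.
Qed.

Section Main.
Variable F : finFieldType.
Variables (r m : nat) (G : 'M[bool]_(r, m)).
Implicit Types (H : 'M[F]_(r, m)) (L : {set 'I_m}) (i j : 'I_m) (k : nat).

Definition Kset k : {set 'I_r} := [set a : 'I_r | (a < k)%N].
Definition VV (H : 'M[F]_(r, m)) k (L : {set 'I_m}) := msk (Kset k) *m H *m msk L.
Definition rho k L := (\max_(H' : 'M[F]_(r, m) | fits G H') \rank (VV H' k L))%N.

Lemma VV_col H k L : \rank (VV H k L) = \rank (msk L *m (msk (Kset k) *m H)^T).
Proof. by rewrite /VV -mxrank_tr trmx_mul msk_tr. Qed.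

Lemma VV_row H k L : VV H k L = msk (Kset k) *m (H *m msk L).
Proof. by rewrite /VV mulmxA. Qed.

Lemma Kset_S (kk : 'I_r) : Kset kk.+1 = kk |: Kset kk.
Proof.
apply/setP => a; rewrite !inE ltnS leq_eqVlt; congr (_ || _).
Qed.

Lemma Kset0 : Kset 0 = set0.
Proof. by apply/setP => a; rewrite !inE. Qed.

Lemma rank_VV_S_le H (kk : 'I_r) L :
  (\rank (VV H kk.+1 L) <= (\rank (VV H kk L)).+1)%N.
Proof. by rewrite !VV_row Kset_S rank_msk_U1_le. Qed.

Lemma rank_VV_mono H k L : (\rank (VV H k L) <= \rank (VV H k.+1 L))%N.
Proof.
rewrite !VV_row; apply: mxrankS; apply: msk_subset.
by apply/subsetP => a; rewrite !inE => /ltnW.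
Qed.

Lemma rank_VV_D1_le H k L i : i \in L ->
  (\rank (VV H k L) <= (\rank (VV H k (L :\ i))).+1)%N.
Proof.
by move=> iL; rewrite !VV_col -{1}(setD1K iL) rank_msk_U1_le.
Qed.

Lemma rho_S_le (kk : 'I_r) L : (rho kk.+1 L <= (rho kk L).+1)%N.
Proof.
apply/bigmax_leqP => H' fH'; apply: leq_trans (rank_VV_S_le H' kk L) _.
by rewrite ltnS; apply: (leq_bigmax_cond H').
Qed.

Lemma rho_D1_le k L i : i \in L -> (rho k L <= (rho k (L :\ i)).+1)%N.
Proof.
move=> iL; apply/bigmax_leqP => H' fH'; apply: leq_trans (rank_VV_D1_le H' k iL) _.
by rewrite ltnS; apply: (leq_bigmax_cond H').
Qed.

Lemma rho_S_empty (kk : 'I_r) L : (forall j, j \in L -> G kk j = false) ->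
  (rho kk.+1 L <= rho kk L)%N.
Proof.
move=> hL; apply/bigmax_leqP => H' fH'.
apply: leq_trans _ (leq_bigmax_cond H' fH').
rewrite !VV_row Kset_S; apply: rank_msk_U1_0.
apply/rowP => j; rewrite /msk mul_mx_diag !mxE.
case: (boolP (j \in L)) => jL; last by rewrite mulr0.
move/forallP: fH' => /(_ kk) /forallP /(_ j); rewrite hL // => /eqP ->.
by rewrite mul0r.
Qed.

Lemma rho0 L : rho 0 L = 0%N.
Proof.
apply/eqP; rewrite -leqn0; apply/bigmax_leqP => H' _.
by rewrite /VV Kset0 msk0 !mul0mx mxrank0.
Qed.


Lemma step H (hM : MCD_output G H) (kk : 'I_r) :
  (forall L, \rank (VV H kk L) = rho kk L) ->
  forall L, (rho kk.+1 L <= \rank (VV H kk.+1 L))%N.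
Proof.
case: hM => h1 h2 h3 IHk.
suff main : forall N L, #|L| = N -> (rho kk.+1 L <= \rank (VV H kk.+1 L))%N.
  by move=> L; exact: main _ L erefl.
elim/ltn_ind => N IHN L cardL.
case: (boolP [exists j in L, G kk j]) => [/existsP [i0 /andP [i0L Gi0]] | hno];
    last first.
  apply: leq_trans (rho_S_empty _) _.
    move=> j jL; apply/negbTE; apply: contra hno => Gj.
    by apply/existsP; exists j; rewrite jL.
  rewrite -IHk; exact: rank_VV_mono.
set Y := H *m msk L.
case: (boolP (row kk Y <= msk (Kset kk) *m Y)%MS) => [sub | nsub]; last first.
  have := rank_msk_U1_gt nsub; rewrite -Kset_S -!VV_row IHk => h.
  exact: leq_trans (rho_S_le kk L) h.
have [w hw] := msk_coeffs sub.
have entry : forall j, j \in L -> H kk j = \sum_(a in Kset kk) w a * H a j.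
  move=> j jL; move: hw; rewrite /Y /msk mul_mx_diag => /rowP /(_ j).
  rewrite !(mxE, summxE) jL mulr1 => ->; apply: eq_bigr => a _.
  by rewrite !mxE jL mulr1.
case: (posnP kk) => [k0 | kpos].
  have := entry i0 i0L; rewrite (h2 kk i0 k0 Gi0).
  have -> : Kset kk = set0 by rewrite k0 Kset0.
  by rewrite big_set0 => /eqP; rewrite oner_eq0.
have [s [us mems nv]] := h3 kk kpos.
have Pi0 : (i0 \in L) && G kk i0 by rewrite i0L Gi0.
case: (@arg_maxnP _ i0 (fun j => (j \in L) && G kk j) (fun j => index j s) Pi0)
  => i /andP [iL Gi] imax.
set Li := ~: [set x | x \in drop (index i s).+1 s].
have LLi : L \subset Li.
  apply/subsetP => x xL; rewrite !inE; apply/negP => xd.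
  have xs : x \in s := mem_drop xd.
  have hle : (index x s <= index i s)%N by apply: imax; rewrite xL -mems xs.
  by have := index_drop us xd; rewrite ltnNge hle.
set Y2 := (msk (Kset kk.+1) *m H)^T.
case: (boolP (row i Y2 <= msk (L :\ i) *m Y2)%MS) => [sub2 | nsub2]; last first.
  have := rank_msk_U1_gt nsub2; rewrite setD1K // -VV_col -VV_col => h.
  have c : (#|L :\ i| < N)%N by rewrite -cardL (cardsD1 i L) iL.
  apply: leq_trans (rho_D1_le _ iL) _; apply: leq_trans _ h; rewrite ltnS.
  exact: IHN _ c _ erefl.
exfalso.
have [w2 hw2] := msk_coeffs sub2.
have entry2 : forall a : 'I_r, (a < kk.+1)%N ->
    H a i = \sum_(j in L :\ i) w2 j * H a j.
  move=> a ha; move: hw2; rewrite /Y2 /msk mul_diag_mx => /rowP /(_ a).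
  rewrite !(mxE, summxE) inE ha mul1r => ->; apply: eq_bigr => j _.
  by rewrite !mxE inE ha mul1r.
set M := topH (ltnW (ltn_ord kk)) H.
have repM : col i M = \sum_(j in L :\ i) w2 j *: col j M.
  apply/matrixP => a b; rewrite !(mxE, summxE) entry2; last first.
    by apply: leq_trans (ltn_ord a) _; apply: leqW.
  by apply: eq_bigr => j _; rewrite !mxE.
have iLi : i \notin L :\ i by rewrite !inE eqxx.
have [L' [L'sub circ [f' rep']]] := circuit_of iLi repM.
have entry3 : forall a : 'I_r, (a < kk)%N ->
    H a i = \sum_(j in L') f' j * H a j.
  move=> a ha; move/matrixP: rep' => /(_ (Ordinal ha) 0).
  have wa : widen_ord (ltnW (ltn_ord kk)) (Ordinal ha) = a by apply: val_inj.
  rewrite !(mxE, summxE) wa => ->; apply: eq_bigr => j _.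
  by rewrite !mxE wa.
have L'L : L' \subset L.
  by apply: subset_trans L'sub _; apply: subD1set.
have his : i \in s by rewrite mems.
apply: (nv i his); exists L'; split => //.
  apply/subsetP => j jL'; move/subsetP: L'sub => /(_ j jL'); rewrite !inE.
  by move=> /andP [-> jL] /=; move/subsetP: LLi => /(_ j jL); rewrite !inE.
exists f'; split => //.
rewrite entry //.
rewrite (eq_bigr (fun a => \sum_(j in L') w a * (f' j * H a j))); last first.
  by move=> a; rewrite inE => ha; rewrite entry3 // mulr_sumr.
rewrite exchange_big /=; apply: eq_bigr => j jL'.
rewrite (entry j); last by move/subsetP: L'L; apply.
rewrite mulr_sumr; apply: eq_bigr => a _; exact: mulrCA.
Qed.

Lemma all_k H (hM : MCD_output G H) :
  forall k, (k <= r)%N -> forall L, \rank (VV H k L) = rho k L.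
Proof.
have fH : fits G H.
  case: hM => h1 _ _; apply/forallP => a; apply/forallP => b.
  by apply/implyP => /negbTE hb; rewrite h1.
elim => [|k IH] hk L.
  by rewrite rho0 /VV Kset0 msk0 !mul0mx mxrank0.
apply/eqP; rewrite eqn_leq; apply/andP; split.
  exact: (leq_bigmax_cond H).
exact: (@step H hM (Ordinal hk) (IH (ltnW hk)) L).
Qed.

End Main.

Theorem proposition5 (F : finFieldType) (r m : nat)
    (G : 'M[bool]_(r, m)) (H : 'M[F]_(r, m)) :
  (r <= m)%N ->
  ('C(m, minn m./2 r) <= #|F|)%N ->
  MCD_output G H ->
  forall (k : 'I_r) (L : {set 'I_m}),
    \rank (subH (ltn_ord k) H L) =
    (\max_(H' : 'M[F]_(r, m) | fits G H') \rank (subH (ltn_ord k) H' L))%N.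
Proof.
move=> _ _ hM k L.
rewrite rank_subH (eq_bigr (fun H' => \rank (VV H' k.+1 L))); last first.
  by move=> H' _; rewrite rank_subH.
exact: (all_k hM (ltn_ord k) L).
Qed.
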